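(* Let $f:\Omega_D\to\mathbb{O}$ be a slice function, $p\in\Omega_D$, and $q=f(p)$. If $q\neq0$, then there exist $a,b\in\mathbb{O}\setminus\{0\}$ with $|b|=|a||q|$ such that the slice function $g=(f\cdot a)\cdot b$ satisfies $g(p)=|a|^2|q|^2>0$. Furthermore, if $p\notin\mathbb{R}\cup V(f'_s)$, one can take $a=\overline{f'_s(p)}$ and $b=f'_s(p)\,\overline q$.
   Context: Octonions $\mathbb{O}=\mathbb{H}+\ell\mathbb{H}$ (product $(a+\ell b)(c+\ell d)=(ac-d\bar b)+\ell(\bar a d+cb)$, conjugation $\overline{a+\ell b}=\bar a-\ell b$), identified with $\mathbb{R}^8$ with norm $|\cdot|$; $\mathbb S=\{I:I^2=-1\}$. $D\subset\mathbb{R}^2$ non-empty open, invariant under $(\alpha,\beta)\mapsto(\alpha,-\beta)$, $\Omega_D=\{\alpha+\beta I:(\alpha,\beta)\in D,I\in\mathbb S\}$, assumed connected. A slice function is $f(\alpha+\beta I)=F_1(\alpha,\beta)+IF_2(\alpha,\beta)$ for a stem function $(F_1,F_2):D\to\mathbb{O}^2$ ($F_1$ even, $F_2$ odd in $\beta$). For $c\in\mathbb{O}$, $f\cdot c$ is the slice function induced by $(F_1c,F_2c)$. The spherical derivative is $f'_s(\alpha+\beta I)=F_2(\alpha,\beta)/\beta$ on $\Omega_D\setminus\mathbb{R}$, and $V(f'_s)=\{x\in\Omega_D\setminus\mathbb{R}:f'_s(x)=0\}$. *)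

(* Defs.v *)
From HB Require Import structures.
From mathcomp Require Import all_boot all_order all_algebra.
From mathcomp Require Import all_classical all_reals all_analysis.
Set Implicit Arguments. Unset Strict Implicit. Unset Printing Implicit Defensive.
Import Order.TTheory GRing.Theory Num.Theory.
Import numFieldNormedType.Exports.
Local Open Scope ring_scope.
Local Open Scope classical_set_scope.

Section Octonions.
Variable R : realType.

(** Real quaternions a0 + a1 i + a2 j + a3 k *)
Record quat := Quat { q0 : R; q1 : R; q2 : R; q3 : R }.

Definition qadd (x y : quat) : quat :=
  Quat (q0 x + q0 y) (q1 x + q1 y) (q2 x + q2 y) (q3 x + q3 y).
Definition qopp (x : quat) : quat := Quat (- q0 x) (- q1 x) (- q2 x) (- q3 x).
Definition qzero : quat := Quat 0 0 0 0.
Definition qconj (x : quat) : quat := Quat (q0 x) (- q1 x) (- q2 x) (- q3 x).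
Definition qmul (x y : quat) : quat :=
  Quat (q0 x * q0 y - q1 x * q1 y - q2 x * q2 y - q3 x * q3 y)
       (q0 x * q1 y + q1 x * q0 y + q2 x * q3 y - q3 x * q2 y)
       (q0 x * q2 y - q1 x * q3 y + q2 x * q0 y + q3 x * q1 y)
       (q0 x * q3 y + q1 x * q2 y - q2 x * q1 y + q3 x * q0 y).

(** Octonions  O = H + l H,  the pair (a, b) standing for a + l b *)
Record oct := Oct { oa : quat; ob : quat }.

Definition oadd (x y : oct) : oct := Oct (qadd (oa x) (oa y)) (qadd (ob x) (ob y)).
Definition oopp (x : oct) : oct := Oct (qopp (oa x)) (qopp (ob x)).
Definition osub (x y : oct) : oct := oadd x (oopp y).
Definition ozero : oct := Oct qzero qzero.
(** (a + l b)(c + l d) = (ac - d conj(b)) + l (conj(a) d + c b) *)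
Definition omul (x y : oct) : oct :=
  Oct (qadd (qmul (oa x) (oa y)) (qopp (qmul (ob y) (qconj (ob x)))))
      (qadd (qmul (qconj (oa x)) (ob y)) (qmul (oa y) (ob x))).
Definition oconj (x : oct) : oct := Oct (qconj (oa x)) (qopp (ob x)).
Definition oreal (r : R) : oct := Oct (Quat r 0 0 0) qzero.
Definition oscale (r : R) (x : oct) : oct := omul (oreal r) x.

Definition ocoords (x : oct) : seq R :=
  [:: q0 (oa x); q1 (oa x); q2 (oa x); q3 (oa x);
      q0 (ob x); q1 (ob x); q2 (ob x); q3 (ob x)].
Definition oct_to_rV (x : oct) : 'rV[R]_8 := \row_(i < 8) nth 0 (ocoords x) i.

Definition onorm (x : oct) : R := Num.sqrt (\sum_(r <- ocoords x) r ^+ 2).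

Definition ore (x : oct) : R := q0 (oa x).
Definition oim (x : oct) : oct := osub x (oreal (ore x)).

Definition osphere : set oct := [set I | omul I I = oreal (-1)].

Definition OmegaD (D : set (R * R)) : set oct :=
  [set x | exists alpha beta I, D (alpha, beta) /\ osphere I /\
             x = oadd (oreal alpha) (oscale beta I)].

Definition is_stem (D : set (R * R)) (F1 F2 : R * R -> oct) : Prop :=
  forall alpha beta, D (alpha, beta) ->
    F1 (alpha, - beta) = F1 (alpha, beta) /\
    F2 (alpha, - beta) = oopp (F2 (alpha, beta)).

(** A fixed imaginary unit (only used at real points, where F2 = 0). *)
Definition ounit_i : oct := Oct (Quat 0 1 0 0) qzero.

(** At x we use the representation alpha = Re x, beta = |Im x|, I = Im x / |Im x|
    (any I if x is real); by evenness/oddness of the stem this is independent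
    of the chosen representation. *)
Definition slice_fun (F1 F2 : R * R -> oct) (x : oct) : oct :=
  let alpha := ore x in
  let beta := onorm (oim x) in
  let I := if beta == 0 then ounit_i else oscale beta^-1 (oim x) in
  oadd (F1 (alpha, beta)) (omul I (F2 (alpha, beta))).

Definition sph_der (F1 F2 : R * R -> oct) (x : oct) : oct :=
  let beta := onorm (oim x) in oscale beta^-1 (F2 (ore x, beta)).

Definition oisreal (x : oct) : Prop := oim x = ozero.

End Octonions.

(* Main.v *)
Require Import Defs.
From HB Require Import structures.
From mathcomp Require Import all_boot all_order all_algebra.
From mathcomp Require Import all_classical all_reals all_analysis.
From mathcomp Require Import ring lra.
Import Order.TTheory GRing.Theory Num.Theory.
Import numFieldNormedType.Exports.
Local Open Scope ring_scope.
Local Open Scope classical_set_scope.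

Section L.

Variable R : realType.
Implicit Types x y z : oct R.

Definition n2 x : R := \sum_(r <- ocoords x) r ^+ 2.

Lemma q0_qadd (x y : quat R) : q0 (qadd x y) = q0 x + q0 y. Proof. by []. Qed.
Lemma q1_qadd (x y : quat R) : q1 (qadd x y) = q1 x + q1 y. Proof. by []. Qed.
Lemma q2_qadd (x y : quat R) : q2 (qadd x y) = q2 x + q2 y. Proof. by []. Qed.
Lemma q3_qadd (x y : quat R) : q3 (qadd x y) = q3 x + q3 y. Proof. by []. Qed.
Lemma q0_qopp (x : quat R) : q0 (qopp x) = - q0 x. Proof. by []. Qed.
Lemma q1_qopp (x : quat R) : q1 (qopp x) = - q1 x. Proof. by []. Qed.
Lemma q2_qopp (x : quat R) : q2 (qopp x) = - q2 x. Proof. by []. Qed.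
Lemma q3_qopp (x : quat R) : q3 (qopp x) = - q3 x. Proof. by []. Qed.
Lemma q0_qconj (x : quat R) : q0 (qconj x) = q0 x. Proof. by []. Qed.
Lemma q1_qconj (x : quat R) : q1 (qconj x) = - q1 x. Proof. by []. Qed.
Lemma q2_qconj (x : quat R) : q2 (qconj x) = - q2 x. Proof. by []. Qed.
Lemma q3_qconj (x : quat R) : q3 (qconj x) = - q3 x. Proof. by []. Qed.
Lemma q0_qmul (x y : quat R) : q0 (qmul x y) = q0 x * q0 y - q1 x * q1 y - q2 x * q2 y - q3 x * q3 y. Proof. by []. Qed.
Lemma q1_qmul (x y : quat R) : q1 (qmul x y) = q0 x * q1 y + q1 x * q0 y + q2 x * q3 y - q3 x * q2 y. Proof. by []. Qed.
Lemma q2_qmul (x y : quat R) : q2 (qmul x y) = q0 x * q2 y - q1 x * q3 y + q2 x * q0 y + q3 x * q1 y. Proof. by []. Qed.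
Lemma q3_qmul (x y : quat R) : q3 (qmul x y) = q0 x * q3 y + q1 x * q2 y - q2 x * q1 y + q3 x * q0 y. Proof. by []. Qed.
Lemma q0_zero : q0 (qzero R) = 0. Proof. by []. Qed.
Lemma q0_lit (a b c d : R) : q0 (Quat a b c d) = a. Proof. by []. Qed.
Lemma q1_zero : q1 (qzero R) = 0. Proof. by []. Qed.
Lemma q1_lit (a b c d : R) : q1 (Quat a b c d) = b. Proof. by []. Qed.
Lemma q2_zero : q2 (qzero R) = 0. Proof. by []. Qed.
Lemma q2_lit (a b c d : R) : q2 (Quat a b c d) = c. Proof. by []. Qed.
Lemma q3_zero : q3 (qzero R) = 0. Proof. by []. Qed.
Lemma q3_lit (a b c d : R) : q3 (Quat a b c d) = d. Proof. by []. Qed.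
Lemma oa_omul (x y : oct R) : oa (omul x y) = qadd (qmul (oa x) (oa y)) (qopp (qmul (ob y) (qconj (ob x)))). Proof. by []. Qed.
Lemma ob_omul (x y : oct R) : ob (omul x y) = qadd (qmul (qconj (oa x)) (ob y)) (qmul (oa y) (ob x)). Proof. by []. Qed.
Lemma oa_oadd (x y : oct R) : oa (oadd x y) = qadd (oa x) (oa y). Proof. by []. Qed.
Lemma ob_oadd (x y : oct R) : ob (oadd x y) = qadd (ob x) (ob y). Proof. by []. Qed.
Lemma oa_oopp (x : oct R) : oa (oopp x) = qopp (oa x). Proof. by []. Qed.
Lemma ob_oopp (x : oct R) : ob (oopp x) = qopp (ob x). Proof. by []. Qed.
Lemma oa_osub (x y : oct R) : oa (osub x y) = qadd (oa x) (qopp (oa y)). Proof. by []. Qed.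
Lemma ob_osub (x y : oct R) : ob (osub x y) = qadd (ob x) (qopp (ob y)). Proof. by []. Qed.
Lemma oa_oconj (x : oct R) : oa (oconj x) = qconj (oa x). Proof. by []. Qed.
Lemma ob_oconj (x : oct R) : ob (oconj x) = qopp (ob x). Proof. by []. Qed.
Lemma oa_oreal (r : R) : oa (oreal r) = Quat r 0 0 0. Proof. by []. Qed.
Lemma ob_oreal (r : R) : ob (oreal r) = qzero R. Proof. by []. Qed.
Lemma oa_ozero : oa (ozero R) = qzero R. Proof. by []. Qed.
Lemma ob_ozero : ob (ozero R) = qzero R. Proof. by []. Qed.
Lemma oa_lit (a b : quat R) : oa (Oct a b) = a. Proof. by []. Qed.
Lemma ob_lit (a b : quat R) : ob (Oct a b) = b. Proof. by []. Qed.

Definition simpO := (q0_qadd, q1_qadd, q2_qadd, q3_qadd, q0_qopp, q1_qopp, q2_qopp, q3_qopp, q0_qconj, q1_qconj, q2_qconj, q3_qconj, q0_qmul, q1_qmul, q2_qmul, q3_qmul, q0_zero, q0_lit, q1_zero, q1_lit, q2_zero, q2_lit, q3_zero, q3_lit, oa_omul, ob_omul, oa_oadd, ob_oadd, oa_oopp, ob_oopp, oa_osub, ob_osub, oa_oconj, ob_oconj, oa_oreal, ob_oreal, oa_ozero, ob_ozero, oa_lit, ob_lit).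

Lemma oscaleE (r : R) x : oscale r x = omul (oreal r) x. Proof. by []. Qed.

Lemma oct_ext x y :
  q0 (oa x) = q0 (oa y) -> q1 (oa x) = q1 (oa y) -> q2 (oa x) = q2 (oa y) -> q3 (oa x) = q3 (oa y) ->
  q0 (ob x) = q0 (ob y) -> q1 (ob x) = q1 (ob y) -> q2 (ob x) = q2 (ob y) -> q3 (ob x) = q3 (ob y) -> x = y.
Proof. by case: x => [[? ? ? ?] [? ? ? ?]]; case: y => [[? ? ? ?] [? ? ? ?]] /= -> -> -> -> -> -> -> ->. Qed.

Lemma n2E x : n2 x = q0 (oa x) ^+2 + q1 (oa x) ^+2 + q2 (oa x) ^+2 + q3 (oa x) ^+2
  + q0 (ob x) ^+2 + q1 (ob x) ^+2 + q2 (ob x) ^+2 + q3 (ob x) ^+2.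
Proof. by rewrite /n2 /ocoords !big_cons big_nil addr0 !addrA. Qed.

Lemma n2_ge0 x : 0 <= n2 x.
Proof. by rewrite /n2 big_seq; apply: sumr_ge0 => i _; exact: sqr_ge0. Qed.

Lemma onorm2 x : onorm x ^+ 2 = n2 x.
Proof. by rewrite /onorm sqr_sqrtr // n2_ge0. Qed.

Lemma n2_eq0 x : n2 x = 0 -> x = ozero R.
Proof.
move/eqP; rewrite /n2 psumr_eq0; last by move=> i _; exact: sqr_ge0.
case: x => [[a b c d] [e f g h]]; rewrite /= !sqrf_eq0.
by move=> /andP[/eqP-> /andP[/eqP-> /andP[/eqP-> /andP[/eqP-> /andP[/eqP-> /andP[/eqP-> /andP[/eqP-> /andP[/eqP-> _]]]]]]]].
Qed.

Ltac red8 := cbv [oa ob q0 q1 q2 q3 qadd qmul qopp qconj qzero omul oreal oscale oconj oadd oopp osub ozero].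
Ltac red8in H := cbv [oa ob q0 q1 q2 q3 qadd qmul qopp qconj qzero omul oreal oscale oconj oadd oopp osub ozero] in H.
Ltac osolve := apply: oct_ext; rewrite ?n2E; red8; ring.

Lemma conj_norm x : omul x (oconj x) = oreal (n2 x).
Proof. Time osolve. Qed.

Lemma alt_r x y : omul (omul x y) (oconj y) = oscale (n2 y) x.
Proof. Time osolve. Qed.

Lemma conjM x y : oconj (omul x y) = omul (oconj y) (oconj x).
Proof. Time osolve. Qed.

Lemma n2M x y : n2 (omul x y) = n2 x * n2 y.
Proof. Time (rewrite !n2E !simpO; ring). Qed.
Lemma case1 F1 I : let q := oadd F1 (omul I (ozero R)) in
  oadd (omul (omul F1 (oreal 1)) (oconj q)) (omul I (omul (omul (ozero R) (oreal 1)) (oconj q)))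
  = oreal (n2 (oreal 1) * n2 q).
Proof. move=> q. rewrite /q. Time osolve. Qed.
Lemma L1 (b : R) s : omul (oscale b s) (oconj s) = oreal (b * n2 s).
Proof. Time osolve. Qed.

Lemma L2 (c : R) x y : omul x (omul (oreal c) y) = omul (oreal c) (omul x y).
Proof. Time osolve. Qed.

Lemma L3 (c : R) x y z : oadd (omul x z) (omul (oreal c) (omul y z)) = omul (oadd x (oscale c y)) z.
Proof. Time osolve. Qed.

Lemma L4 (b : R) x s : omul (omul x (oscale b s)) (oconj s) = oscale (b * n2 s) x.
Proof. Time osolve. Qed.

Lemma L5 x y z : omul (oadd x y) z = oadd (omul x z) (omul y z).
Proof. Time osolve. Qed.

Lemma conjK x : oconj (oconj x) = x.
Proof. Time osolve. Qed.

Lemma n2_conj x : n2 (oconj x) = n2 x.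
Proof. rewrite !n2E; red8; ring. Qed.

Lemma n2_oreal1 : n2 (oreal (1:R)) = 1.
Proof. rewrite !n2E; red8; ring. Qed.

Lemma case2 F1 I s (b : R) : let q := oadd F1 (omul I (oscale b s)) in
  let a := oconj s in let bb := omul s (oconj q) in
  oadd (omul (omul F1 a) bb) (omul I (omul (omul (oscale b s) a) bb))
  = oreal (n2 a * n2 q).
Proof.
move=> q a bb.
rewrite /a L1 L2 L3 -L4 -L5 -/q /bb.
have -> : omul s (oconj q) = oconj (omul q (oconj s)) by rewrite conjM conjK.
by rewrite conj_norm n2M n2_conj mulrC.
Qed.
Lemma sphere_prop J : osphere J -> q0 (oa J) = 0 /\ n2 J = 1.
Proof.
rewrite /osphere /=; case: J => [[x0 x1 x2 x3] [y0 y1 y2 y3]] H.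
have h0 := congr1 (fun z => q0 (oa z)) H; have h1 := congr1 (fun z => q1 (oa z)) H.
have h2 := congr1 (fun z => q2 (oa z)) H; have h3 := congr1 (fun z => q3 (oa z)) H.
have h4 := congr1 (fun z => q0 (ob z)) H; have h5 := congr1 (fun z => q1 (ob z)) H.
have h6 := congr1 (fun z => q2 (ob z)) H; have h7 := congr1 (fun z => q3 (ob z)) H.
red8in h0; red8in h1; red8in h2; red8in h3; red8in h4; red8in h5; red8in h6; red8in h7.
have ex : x0 * (x0 ^+ 2 + 1) = 0.
  move: h0 h1 h2 h3 h4 h5 h6 h7.
  set L0 := (X in X = -1); set L1 := (X in X = 0 -> _).
  move=> h0 h1; set L2 := (X in X = 0 -> _); move=> h2; set L3 := (X in X = 0 -> _); move=> h3.
  set L4 := (X in X = 0 -> _); move=> h4; set L5 := (X in X = 0 -> _); move=> h5.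
  set L6 := (X in X = 0 -> _); move=> h6; set L7 := (X in X = 0 -> _); move=> h7.
  have E : 2 * (x0 * (x0 ^+ 2 + 1)) = 2 * x0 * (L0 + 1) + x1 * L1 + x2 * L2 + x3 * L3
     + y0 * L4 + y1 * L5 + y2 * L6 + y3 * L7.
    rewrite /L0 /L1 /L2 /L3 /L4 /L5 /L6 /L7; ring.
  move: E; rewrite h0 h1 h2 h3 h4 h5 h6 h7 addNr !mulr0 !addr0 => /eqP.
  by rewrite mulf_eq0 pnatr_eq0 /= => /eqP.
have x00 : x0 = 0.
  move/eqP: ex; rewrite mulf_eq0 => /orP[/eqP //|]; rewrite paddr_eq0 ?sqr_ge0 // oner_eq0 andbF //.
split => //; rewrite n2E; red8; subst x0; lra.
Qed.

Lemma omega_D (D : set (R * R)) (D_sym : forall alpha beta, D (alpha, beta) -> D (alpha, - beta)) p :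
  OmegaD D p -> D (ore p, onorm (oim p)).
Proof.
case=> al [be [J [HD [HJ ->]]]].
have [J0 J1] := @sphere_prop J HJ.
have J0' := J0; red8in J0'.
have hre : ore (oadd (oreal al) (oscale be J)) = al.
  rewrite /ore; red8; rewrite J0'; ring.
have hn : n2 (oim (oadd (oreal al) (oscale be J))) = be ^+ 2.
  have -> : n2 (oim (oadd (oreal al) (oscale be J))) = be ^+ 2 * n2 J.
    rewrite /oim hre !n2E /osub; red8; rewrite J0'; ring.
  by rewrite J1 mulr1.
have -> : onorm (oim (oadd (oreal al) (oscale be J))) = Num.sqrt (n2 (oim (oadd (oreal al) (oscale be J)))) by [].
rewrite hn sqrtr_sqr hre.
have [hb|hb] := leP 0 be.
  by rewrite ger0_norm.
by rewrite ltr0_norm //; apply: D_sym.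
Qed.

Lemma oscaleA (r t : R) x : oscale r (oscale t x) = oscale (r * t) x.
Proof. osolve. Qed.
Lemma oscale1 x : oscale 1 x = x.
Proof. osolve. Qed.
Lemma oscale0 x : oscale 0 x = ozero R.
Proof. osolve. Qed.
Lemma oscalex0 (r : R) : oscale r (ozero R) = ozero R.
Proof. osolve. Qed.
Lemma oaddxx x : oadd x x = oscale 2 x.
Proof. osolve. Qed.
Lemma oconj0 : oconj (ozero R) = ozero R.
Proof. osolve. Qed.
Lemma n2_0 : n2 (ozero R) = 0.
Proof. rewrite n2E; red8; ring. Qed.

Lemma scale_inj (r : R) x : r != 0 -> oscale r x = ozero R -> x = ozero R.
Proof.
move=> hr H; rewrite -[x]oscale1 -(mulVf hr) -oscaleA H oscalex0 //.
Qed.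

Lemma n2_gt0 x : x <> ozero R -> 0 < n2 x.
Proof.
move=> hx; rewrite lt0r n2_ge0 andbT; apply/eqP => /n2_eq0; exact: hx.
Qed.

Lemma onormE x : onorm x = Num.sqrt (n2 x). Proof. by []. Qed.

Lemma main_part (F1v F2v I : oct R) (be : R) (Hodd : be = 0 -> F2v = ozero R) :
 let q := oadd F1v (omul I F2v) in
 let G a b := oadd (omul (omul F1v a) b) (omul I (omul (omul F2v a) b)) in
 let good a b := [/\ a <> ozero R, b <> ozero R, onorm b = onorm a * onorm q,
      G a b = oreal (onorm a ^+ 2 * onorm q ^+ 2) & 0 < onorm a ^+ 2 * onorm q ^+ 2] in
 q <> ozero R -> (exists a b, good a b) /\
   (oscale be^-1 F2v <> ozero R -> good (oconj (oscale be^-1 F2v)) (omul (oscale be^-1 F2v) (oconj q))).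
Proof.
move=> q G good hq.
have part2 : oscale be^-1 F2v <> ozero R -> good (oconj (oscale be^-1 F2v)) (omul (oscale be^-1 F2v) (oconj q)).
  set s := oscale be^-1 F2v => hs.
  have hbe : be != 0.
    apply/eqP => hb; apply: hs; rewrite /s hb invr0 oscale0 //.
  have E : F2v = oscale be s by rewrite /s oscaleA mulfV // oscale1.
  have ha : oconj s <> ozero R.
    by move=> h; apply: hs; rewrite -[s]conjK h oconj0.
  have nb : n2 (omul s (oconj q)) = n2 s * n2 q by rewrite n2M n2_conj.
  have hsp := n2_gt0 _ hs; have hqp := n2_gt0 _ hq.
  split.
  - exact: ha.
  - move=> h; move: nb; rewrite h n2_0 => /esym/eqP; rewrite mulf_eq0 => /orP[] /eqP h'.
      by move: hsp; rewrite h' ltxx.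
    by move: hqp; rewrite h' ltxx.
  - by rewrite !onormE nb n2_conj sqrtrM // ltW.
  - rewrite !onorm2 /G /q E; exact: case2.
  - by rewrite !onorm2 n2_conj mulr_gt0.
split=> //.
have [hs|hs] := pselect (oscale be^-1 F2v = ozero R); last first.
  by exists (oconj (oscale be^-1 F2v)), (omul (oscale be^-1 F2v) (oconj q)); apply: part2.
have F0 : F2v = ozero R.
  have [hb|hb] := eqVneq be 0; first exact: Hodd.
  apply: (scale_inj (be^-1) F2v) => //; by rewrite invr_eq0.
exists (oreal 1), (oconj q).
have hqp := n2_gt0 _ hq.
have h1 : oreal (1 : R) <> ozero R.
  by move=> h; have := n2_oreal1; rewrite h n2_0 => /eqP; rewrite eq_sym oner_eq0.
split.
- exact: h1.
- by move=> h; apply: hq; rewrite -[q]conjK h oconj0.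
- by rewrite !onormE n2_conj n2_oreal1 sqrtr1 mul1r.
- rewrite !onorm2 /G /q F0; exact: case1.
- by rewrite !onorm2 n2_oreal1 mul1r.
Qed.
Lemma oaddN x : oadd x (oopp x) = ozero R.
Proof. osolve. Qed.

Lemma oopp_fix x : x = oopp x -> x = ozero R.
Proof.
move=> h; apply: (scale_inj 2 x); first by rewrite pnatr_eq0.
by rewrite -oaddxx {2}h oaddN.
Qed.
End L.

Theorem corollary3p11 (R : realType) (D : set (R * R))
  (D_ne : D !=set0) (D_open : open D)
  (D_sym : forall alpha beta, D (alpha, beta) -> D (alpha, - beta))
  (Omega_conn : connected (@oct_to_rV R @` OmegaD D))
  (F1 F2 : R * R -> oct R) (HF : is_stem D F1 F2)
  (p : oct R) (Hp : OmegaD D p) :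
  let q := slice_fun F1 F2 p in
  (* g = (f . a) . b is the slice function induced by ((F1 a) b, (F2 a) b) *)
  let g a b := slice_fun (fun z => omul (omul (F1 z) a) b)
                         (fun z => omul (omul (F2 z) a) b) in
  let good a b :=
    [/\ a <> ozero R, b <> ozero R,
        onorm b = onorm a * onorm q,
        g a b p = oreal (onorm a ^+ 2 * onorm q ^+ 2)
      & 0 < onorm a ^+ 2 * onorm q ^+ 2] in
  q <> ozero R ->
  (exists a b, good a b) /\
  (~ oisreal p -> sph_der F1 F2 p <> ozero R ->
     good (oconj (sph_der F1 F2 p)) (omul (sph_der F1 F2 p) (oconj q))).
Proof.
move=> q g good hq.
have HD := @omega_D R D D_sym p Hp.
set al := ore p in HD *; set be := onorm (oim p) in HD *.
have Hodd : be = 0 -> F2 (al, be) = ozero R.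
  move=> hb; have [_ h] := HF _ _ HD; rewrite hb oppr0 in h; rewrite hb.
  exact: oopp_fix.
have [h1 h2] := @main_part R (F1 (al, be)) (F2 (al, be))
  (if be == 0 then ounit_i R else oscale be^-1 (oim p)) be Hodd hq.
split; first exact: h1.
move=> _; exact: h2.
Qed.
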